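(* Let $(r,\alpha,\beta,L,R)$ and $(r',\alpha',\beta',L',R')$ be $(m,n)$-allowed quintuples with $L\,\Pi(\alpha,\beta)\,R=L'\,\Pi(\alpha',\beta')\,R'$. Then $(r,\alpha,\beta,L,R)=(r',\alpha',\beta',L',R')$.
   Context: $\mathbb{F}$ is the field with two elements, $[n]=\{1,\dots,n\}$, $e_{n,i}$ standard basis column vectors, $I_n$ identity. $P_n=\{(i,j):i,j\in[n],i>j\}$; for transitive $T\subseteq P_n$ ($(i,j),(j,k)\in T\Rightarrow(i,k)\in T$), $L_n(T)=I_n+\mathrm{span}_{\mathbb{F}}\{e_{n,i}e_{n,j}^{\top}:(i,j)\in T\}$. $\Pi(\alpha,\beta)=\sum_{i=1}^re_{m,\alpha(i)}e_{n,\beta(i)}^{\top}\in\mathbb{F}^{m\times n}$. For increasing $\alpha:[r]\to[m]$, $T_L(\alpha)=\{(i,j):j\in\mathrm{Im}(\alpha),i>j\}\subseteq P_m$; for injective $\beta:[r]\to[n]$, $T_R(\beta)=\{(i,j):i\in\mathrm{Im}(\beta),j<i,j\notin\{\beta(1),\dots,\beta(\beta^{-1}(i)-1)\}\}$. A quintuple $(r,\alpha,\beta,L,R)$ is $(m,n)$-allowed if $r\le\min(m,n)$, $\alpha:[r]\to[m]$ is increasing, $\beta:[r]\to[n]$ is injective, $L\in L_m(T_L(\alpha))$, $R\in L_n(T_R(\beta))$. *)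

(* Defs.v *)
From mathcomp Require Import all_boot all_algebra.
Set Implicit Arguments. Unset Strict Implicit. Unset Printing Implicit Defensive.
Import GRing.Theory.
Local Open Scope ring_scope.

(* The field with two elements. Indices [n] = {1..n} are represented by
   'I_n = {0..n-1} (shift by one, order-preserving). *)
Notation F2 := 'F_2.

Definition in_L (n : nat) (T : 'I_n -> 'I_n -> bool) (A : 'M[F2]_n) : Prop :=
  exists c : 'I_n -> 'I_n -> F2,
    A = 1%:M + \sum_(i : 'I_n) \sum_(j : 'I_n | T i j) c i j *: delta_mx i j.

Definition Pi (m n r : nat) (alpha : 'I_r -> 'I_m) (beta : 'I_r -> 'I_n)
  : 'M[F2]_(m, n) := \sum_(k < r) delta_mx (alpha k) (beta k).

Definition TL (m r : nat) (alpha : 'I_r -> 'I_m) (i j : 'I_m) : bool :=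
  (j \in codom alpha) && (j < i)%N.

Definition TR (n r : nat) (beta : 'I_r -> 'I_n) (i j : 'I_n) : bool :=
  [exists k : 'I_r, (beta k == i) &&
     [forall l : 'I_r, (l < k)%N ==> (beta l != j)]] && (j < i)%N.

Definition allowed (m n r : nat) (alpha : 'I_r -> 'I_m) (beta : 'I_r -> 'I_n)
  (L : 'M[F2]_m) (R : 'M[F2]_n) : Prop :=
  [/\ (r <= minn m n)%N,
      (forall k l : 'I_r, (k < l)%N -> (alpha k < alpha l)%N),
      injective beta,
      in_L (TL alpha) L &
      in_L (TR beta) R].

(* Main.v *)
Require Import Defs.
From mathcomp Require Import all_boot all_algebra.
From Stdlib Require Import FunctionalExtensionality.
Set Implicit Arguments. Unset Strict Implicit. Unset Printing Implicit Defensive.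
Import GRing.Theory.
Local Open Scope ring_scope.

Section Pat.
Variable R : fieldType.
Variable n : nat.
Variable T : 'I_n -> 'I_n -> bool.
Hypothesis Tstrict : forall i j, T i j -> (j < i)%N.
Hypothesis Ttrans : forall i j k, T i j -> T j k -> T i k.

Definition pat (X : 'M[R]_n) := forall i j, i != j -> ~~ T i j -> X i j = 0.
Definition good (X : 'M[R]_n) := pat X /\ forall i, X i i = 1.

Lemma pat_mul X Y : pat X -> pat Y -> pat (X *m Y).
Proof.
move=> pX pY i j nij nT; rewrite mxE big1 // => k _.
have [<-|nik] := eqVneq i k; first by rewrite (pY i j) ?mulr0.
have [ekj|nkj] := eqVneq k j; first by rewrite ekj pX ?mul0r.
case tik: (T i k); last by rewrite pX ?tik ?mul0r.
case tkj: (T k j); last by rewrite pY ?tkj ?mulr0.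
by rewrite (Ttrans tik tkj) in nT.
Qed.

Lemma pat1 : pat 1%:M.
Proof. by move=> i j nij _; rewrite mxE (negbTE nij). Qed.

Lemma pat_add X Y : pat X -> pat Y -> pat (X + Y).
Proof. by move=> pX pY i j nij nT; rewrite mxE pX ?pY ?addr0. Qed.

Lemma pat_opp X : pat X -> pat (- X).
Proof. by move=> pX i j nij nT; rewrite mxE pX ?oppr0. Qed.

Lemma pat0 : pat 0.
Proof. by move=> i j _ _; rewrite mxE. Qed.

Lemma pat_exp X k : pat X -> pat (X ^+ k).
Proof.
move=> pX; elim: k => [|k IH]; first exact: pat1.
by rewrite exprS -mulmxE; apply: pat_mul.
Qed.

Lemma pat_sum k (F : 'I_k -> 'M[R]_n) : (forall i, pat (F i)) -> pat (\sum_i F i).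
Proof.
move=> H; elim/big_ind: _ => //; [exact: pat0 | exact: pat_add].
Qed.

Lemma diag_mul X Y i : pat X -> pat Y -> (X *m Y) i i = X i i * Y i i.
Proof.
move=> pX pY; rewrite mxE (bigD1 i) //= big1 ?addr0 // => k nki.
case tik: (T i k); last by rewrite pX ?tik ?mul0r // eq_sym.
case tki: (T k i); last by rewrite pY ?tki ?mulr0.
by have := ltn_trans (Tstrict tik) (Tstrict tki); rewrite ltnn.
Qed.

Lemma nilp N : pat N -> (forall i, N i i = 0) -> N ^+ n = 0.
Proof.
move=> pN dN.
have H : forall k (i j : 'I_n), (i < j + k)%N -> (N ^+ k) i j = 0.
  elim=> [|k IH] i j.
    by rewrite addn0 expr0 mxE; case: eqP => // ->; rewrite ltnn.
  move=> lij; rewrite exprSr -mulmxE mxE big1 // => l _.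
  have [ljl|] := ltnP j l; first by rewrite IH ?mul0r //; apply: leq_trans lij _; rewrite addnS ltn_add2r.
  move=> llj; have [->|nlj] := eqVneq l j; first by rewrite dN mulr0.
  rewrite pN ?mulr0 //; apply/negP => /Tstrict; rewrite ltnNge llj.
  done.
apply/matrixP => i j; rewrite [RHS]mxE H //.
by apply: leq_trans (ltn_ord i) _; rewrite leq_addl.
Qed.

Definition uinv (X : 'M[R]_n) := \sum_(k < n) (1%:M - X) ^+ k.

Lemma uinvP X : good X -> [/\ good (uinv X), X *m uinv X = 1%:M & uinv X *m X = 1%:M].
Proof.
case=> pX dX.
have pN : pat (1%:M - X) by apply: pat_add; [exact: pat1 | exact: pat_opp].
have dN : forall i, (1%:M - X) i i = 0 by move=> i; rewrite !mxE eqxx dX subrr.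
have pY : pat (uinv X) by apply: pat_sum => k; apply: pat_exp.
have XY : X *m uinv X = 1%:M.
  have := subrXX_comm n (commr_sym (commr1 (1%:M - X))).
  rewrite (nilp pN dN) expr1n subr0 opprB addrC subrK => H.
  apply: etrans (esym H).
  rewrite mulmxE; congr (_ * _); apply: eq_bigr => k _; by rewrite expr1n mul1r.
split => //; last exact: mulmx1C.
split => // i; have := diag_mul i pX pY; rewrite XY dX mul1r mxE eqxx => <-.
by [].
Qed.
End Pat.

Lemma in_L_good n (T : 'I_n -> 'I_n -> bool) A :
  (forall i, ~~ T i i) -> in_L T A -> good T A.
Proof.
move=> Tirr [c ->].
have E : forall i j, (\sum_(i0 : 'I_n) \sum_(j0 : 'I_n | T i0 j0) c i0 j0 *: delta_mx i0 j0 : 'M[F2]_n) i j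
   = if T i j then c i j else 0.
  move=> i j; rewrite summxE (bigD1 i) //= [X in _ + X]big1 => [|i' ni'].
    rewrite addr0 summxE; case: ifP => Tij.
      rewrite (bigD1 j) //= big1 => [|j' /andP [_ nj']].
        by rewrite addr0 !mxE !eqxx mulr1.
      by rewrite !mxE eqxx eq_sym (negbTE nj') mulr0.
    rewrite big1 // => j' Tj'; rewrite !mxE eqxx /=.
    case: eqP => [ej|]; last by rewrite mulr0.
    by subst; rewrite Tij in Tj'.
  by rewrite summxE big1 // => j' _; rewrite !mxE eq_sym (negbTE ni') mulr0.
split.
  by move=> i j nij nT; rewrite !mxE E (negbTE nij) (negbTE nT) addr0.
by move=> i; rewrite !mxE E eqxx (negbTE (Tirr i)) addr0.
Qed.

Lemma Pi_entry m n r (alpha : 'I_r -> 'I_m) (beta : 'I_r -> 'I_n) i j :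
  Pi alpha beta i j = \sum_k ((alpha k == i) && (beta k == j))%:R.
Proof. by rewrite summxE; apply: eq_bigr => k _; rewrite mxE !(eq_sym _ i) (eq_sym _ j). Qed.

Lemma mulPi m n r (alpha : 'I_r -> 'I_m) (beta : 'I_r -> 'I_n) (A : 'M[F2]_m) i j :
  (A *m Pi alpha beta) i j = \sum_k A i (alpha k) * (beta k == j)%:R.
Proof.
rewrite mxE; under eq_bigr do rewrite Pi_entry mulr_sumr.
rewrite exchange_big; apply: eq_bigr => k _.
rewrite (bigD1 (alpha k)) //= big1 ?addr0 => [|l nl]; first by rewrite eqxx.
by rewrite eq_sym (negbTE nl) mulr0.
Qed.

Lemma Pimul m n r (alpha : 'I_r -> 'I_m) (beta : 'I_r -> 'I_n) (B : 'M[F2]_n) i j :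
  (Pi alpha beta *m B) i j = \sum_k (alpha k == i)%:R * B (beta k) j.
Proof.
rewrite mxE; under eq_bigr do rewrite Pi_entry mulr_suml.
rewrite exchange_big; apply: eq_bigr => k _.
rewrite (bigD1 (beta k)) //= big1 ?addr0 => [|l nl]; first by rewrite eqxx andbT.
by rewrite (eq_sym (beta k)) (negbTE nl) andbF mul0r.
Qed.

Section Entries.
Variables m n r : nat.
Variables (alpha : 'I_r -> 'I_m) (beta : 'I_r -> 'I_n).

Lemma mulPi_beta (A : 'M[F2]_m) i k : injective beta ->
  (A *m Pi alpha beta) i (beta k) = A i (alpha k).
Proof.
move=> bi; rewrite mulPi (bigD1 k) //= big1 ?addr0 => [|l nl]; first by rewrite eqxx mulr1.
by rewrite (inj_eq bi) (negbTE nl) mulr0.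
Qed.

Lemma mulPi_out (A : 'M[F2]_m) i j : (forall k, beta k != j) ->
  (A *m Pi alpha beta) i j = 0.
Proof. by move=> H; rewrite mulPi big1 // => k _; rewrite (negbTE (H k)) mulr0. Qed.

Lemma Pimul_alpha (B : 'M[F2]_n) k j : injective alpha ->
  (Pi alpha beta *m B) (alpha k) j = B (beta k) j.
Proof.
move=> ai; rewrite Pimul (bigD1 k) //= big1 ?addr0 => [|l nl]; first by rewrite eqxx mul1r.
by rewrite (inj_eq ai) (negbTE nl) mul0r.
Qed.

Lemma Pimul_out (B : 'M[F2]_n) i j : (forall k, alpha k != i) ->
  (Pi alpha beta *m B) i j = 0.
Proof. by move=> H; rewrite Pimul big1 // => k _; rewrite (negbTE (H k)) mul0r. Qed.
End Entries.

Lemma inc_inj m r (alpha : 'I_r -> 'I_m) :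
  (forall k l : 'I_r, (k < l)%N -> (alpha k < alpha l)%N) -> injective alpha.
Proof.
move=> H k l e; apply: val_inj => /=; case: (ltngtP k l) => // h.
  by have := H _ _ h; rewrite e ltnn.
by have := H _ _ h; rewrite e ltnn.
Qed.

Lemma inc_le m r (alpha : 'I_r -> 'I_m) :
  (forall k l : 'I_r, (k < l)%N -> (alpha k < alpha l)%N) ->
  forall k l : 'I_r, (alpha k < alpha l)%N -> (k < l)%N.
Proof.
move=> H k l h; case: (ltngtP k l) => // h'.
  by have := ltn_trans h (H _ _ h'); rewrite ltnn.
have e : k = l by apply: val_inj.
by rewrite e ltnn in h.
Qed.

Lemma sum_eq_le r (a b : 'I_r -> nat) : (forall k, a k <= b k)%N ->
  (\sum_k a k = \sum_k b k)%N -> forall k, a k = b k.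
Proof.
move=> le e.
have e2 : (\sum_k b k = \sum_k a k + \sum_k (b k - a k))%N.
  by rewrite -big_split /=; apply: eq_bigr => k _; rewrite subnKC.
have : (\sum_k (b k - a k) == 0)%N.
  by rewrite -(eqn_add2l (\sum_k a k)) -e2 -e addn0.
rewrite sum_nat_eq0 => /forallP H k; have := H k; rewrite /= subn_eq0 => h.
by apply/eqP; rewrite eqn_leq le h.
Qed.

Definition LT n := fun i j : 'I_n => (j < i)%N.

Lemma core1 m n r r' (alpha : 'I_r -> 'I_m) (beta : 'I_r -> 'I_n)
  (alpha' : 'I_r' -> 'I_m) (beta' : 'I_r' -> 'I_n) (A : 'M[F2]_m) (B : 'M[F2]_n) :
  (forall k l : 'I_r, (k < l)%N -> (alpha k < alpha l)%N) ->
  (forall k l : 'I_r', (k < l)%N -> (alpha' k < alpha' l)%N) ->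
  injective beta -> injective beta' ->
  good (@LT m) A -> good (@LT n) B ->
  A *m Pi alpha beta = Pi alpha' beta' *m B ->
  exists e : r = r', forall k : 'I_r, alpha k = alpha' (cast_ord e k) /\ beta k = beta' (cast_ord e k).
Proof.
move=> ainc ainc' bi bi' [pA dA] [pB dB] E.
have ai := inc_inj ainc; have ai' := inc_inj ainc'.
have hf : forall k, exists l, alpha' l = alpha k /\ (beta k <= beta' l)%N.
  move=> k; have h1 : (Pi alpha' beta' *m B) (alpha k) (beta k) = 1.
    by rewrite -E mulPi_beta.
  case: (pickP (fun l => alpha' l == alpha k)) => [l /eqP el|none]; last first.
    move: h1; rewrite Pimul_out => [/esym/eqP|l]; first by rewrite oner_eq0.
    exact: (negbT (none _)).
  exists l; split => //; move: h1; rewrite -el Pimul_alpha //.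
  case: (leqP (beta k) (beta' l)) => // lt.
  rewrite pB ?oner_eq0 //; last by rewrite /LT -leqNgt ltnW.
  by apply/eqP => e; rewrite e ltnn in lt.
have hg : forall l, exists k, beta k = beta' l /\ (alpha k <= alpha' l)%N.
  move=> l; have h1 : (A *m Pi alpha beta) (alpha' l) (beta' l) = 1.
    by rewrite E Pimul_alpha.
  case: (pickP (fun k => beta k == beta' l)) => [k /eqP ek|none]; last first.
    move: h1; rewrite mulPi_out => [/esym/eqP|k]; first by rewrite oner_eq0.
    exact: (negbT (none _)).
  exists k; split => //; move: h1; rewrite -ek mulPi_beta //.
  case: (leqP (alpha k) (alpha' l)) => // lt.
  rewrite pA ?oner_eq0 //; last by rewrite /LT -leqNgt ltnW.
  by apply/eqP => e; rewrite e ltnn in lt.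
have [f hf2] := fin_all_exists hf.
have [g hg2] := fin_all_exists hg.
have finj : injective f.
  by move=> k1 k2 e; apply: ai; rewrite -(hf2 k1).1 -(hf2 k2).1 e.
have ginj : injective g.
  by move=> k1 k2 e; apply: bi'; rewrite -(hg2 k1).1 -(hg2 k2).1 e.
have er : r = r'.
  have l1 := leq_card _ finj; have l2 := leq_card _ ginj.
  rewrite !card_ord in l1 l2; by apply/eqP; rewrite eqn_leq l1 l2.
subst r'.
exists erefl.
have hinj : injective (g \o f) by apply: inj_comp.
have ha : forall k, alpha (g (f k)) = alpha k.
  move=> k; apply: val_inj; apply: (@sum_eq_le r (fun k => nat_of_ord (alpha (g (f k)))) (fun k => nat_of_ord (alpha k))).
    by move=> k'; rewrite -(hf2 k').1; exact: (hg2 (f k')).2.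
  by rewrite [RHS](reindex_inj hinj).
have hgf : forall k, g (f k) = k by move=> k; apply: ai; apply: ha.
have fid : forall k : 'I_r, f k = k.
  have mono : forall k l : 'I_r, (k < l)%N -> (f k < f l)%N.
    move=> k l kl; apply: (inc_le ainc'); rewrite (hf2 k).1 (hf2 l).1; exact: ainc.
  have ge : forall k : 'I_r, (k <= f k)%N.
    have H : forall p (H : (p < r)%N), (p <= f (Ordinal H))%N.
      elim=> [//|p IH] H.
      have H' : (p < r)%N by apply: ltnW.
      apply: leq_ltn_trans (IH H') _; apply: mono => //.
    by case=> p Hp; apply: H.
  move=> k; apply: val_inj; apply/esym.
  apply: (@sum_eq_le r (fun k => nat_of_ord k) (fun k => nat_of_ord (f k))) => //.
  by rewrite [LHS](reindex_inj finj).
move=> k; rewrite cast_ord_id; split.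
  by rewrite -{2}(fid k) (hf2 k).1.
by rewrite -{1}(hgf k) (hg2 (f k)).1 fid.
Qed.

Lemma TL_strict m r (alpha : 'I_r -> 'I_m) i j : TL alpha i j -> (j < i)%N.
Proof. by case/andP. Qed.

Lemma TL_trans m r (alpha : 'I_r -> 'I_m) i j k : TL alpha i j -> TL alpha j k -> TL alpha i k.
Proof. by case/andP=> _ ji /andP [ck kj]; rewrite /TL ck (ltn_trans kj ji). Qed.

Lemma TR_strict n r (beta : 'I_r -> 'I_n) i j : TR beta i j -> (j < i)%N.
Proof. by case/andP. Qed.

Lemma TR_trans n r (beta : 'I_r -> 'I_n) i j k : injective beta ->
  TR beta i j -> TR beta j k -> TR beta i k.
Proof.
move=> bi /andP [/existsP [ki /andP [/eqP bki Hi]] ji] /andP [/existsP [kj /andP [/eqP bkj Hj]] kj'].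
rewrite /TR (ltn_trans kj' ji) andbT; apply/existsP; exists ki; rewrite bki eqxx /=.
have le : (ki <= kj)%N.
  rewrite leqNgt; apply/negP => lt; move/forallP: Hi => /(_ kj); rewrite lt /= bkj eqxx.
  by [].
apply/forallP => l; apply/implyP => lk; move/forallP: Hj => /(_ l) /implyP; apply.
exact: leq_trans lk le.
Qed.

Lemma core2 m n r (alpha : 'I_r -> 'I_m) (beta : 'I_r -> 'I_n) (A : 'M[F2]_m) (B : 'M[F2]_n) :
  (forall k l : 'I_r, (k < l)%N -> (alpha k < alpha l)%N) ->
  injective beta ->
  good (TL alpha) A -> good (TR beta) B ->
  A *m Pi alpha beta = Pi alpha beta *m B -> A = 1%:M /\ B = 1%:M.
Proof.
move=> ainc bi [pA dA] [pB dB] E.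
have ai := inc_inj ainc.
have A1 : A = 1%:M.
  apply/matrixP => i j; rewrite [RHS]mxE.
  have [<-|nij] := eqVneq i j; first by rewrite dA.
  case T: (TL alpha i j); last by rewrite pA ?T.
  move: (T) => /andP [/codomP [k ->] lt].
  rewrite -(mulPi_beta alpha A i k bi) E.
  case: (pickP (fun l => alpha l == i)) => [l /eqP eli|none]; last first.
    by rewrite Pimul_out // => l; exact: (negbT (none _)).
  rewrite -eli Pimul_alpha //.
  have kl : (k < l)%N by apply: (inc_le ainc); rewrite eli.
  apply: pB.
    by rewrite (inj_eq bi); apply/eqP => e; rewrite e ltnn in kl.
  apply/negP => /andP [/existsP [k0 /andP [/eqP bk0 H]] _].
  have e : k0 = l by apply: bi.
  by move/forallP: H => /(_ k); rewrite e kl eqxx.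
split => //.
apply/matrixP => i j; rewrite [RHS]mxE.
have [<-|nij] := eqVneq i j; first by rewrite dB.
case T: (TR beta i j); last by rewrite pB ?T.
move: (T) => /andP [/existsP [k /andP [/eqP bk _]] _].
rewrite -bk -(Pimul_alpha beta B k j ai) -E A1 mul1mx -[Pi _ _]mulmx1 Pimul_alpha // mxE bk.
by rewrite (negbTE nij).
Qed.

Lemma good_mul (R : fieldType) n (T : 'I_n -> 'I_n -> bool) (X Y : 'M[R]_n) :
  (forall i j, T i j -> (j < i)%N) -> (forall i j k, T i j -> T j k -> T i k) ->
  good T X -> good T Y -> good T (X *m Y).
Proof.
move=> Ts Tt [pX dX] [pY dY]; split; first exact: pat_mul.
by move=> i; rewrite (diag_mul Ts) // dX dY mulr1.
Qed.

Lemma good_LT (R : fieldType) n (T : 'I_n -> 'I_n -> bool) (X : 'M[R]_n) :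
  (forall i j, T i j -> (j < i)%N) -> good T X -> good (@LT n) X.
Proof.
move=> Ts [pX dX]; split; last exact: dX.
move=> i j nij nT; apply: pX => //.
apply/negP => /Ts h; by move: nT; rewrite /LT h.
Qed.

Lemma LT_strict n (i j : 'I_n) : LT i j -> (j < i)%N. Proof. by []. Qed.
Lemma LT_trans n (i j k : 'I_n) : LT i j -> LT j k -> LT i k.
Proof. by rewrite /LT => a b; apply: ltn_trans b a. Qed.

Theorem theorem4 (m n r r' : nat)
  (alpha : 'I_r -> 'I_m) (beta : 'I_r -> 'I_n) (L : 'M[F2]_m) (R : 'M[F2]_n)
  (alpha' : 'I_r' -> 'I_m) (beta' : 'I_r' -> 'I_n) (L' : 'M[F2]_m) (R' : 'M[F2]_n) :
  allowed alpha beta L R ->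
  allowed alpha' beta' L' R' ->
  L *m Pi alpha beta *m R = L' *m Pi alpha' beta' *m R' ->
  [/\ r = r',
      (forall (k : 'I_r) (k' : 'I_r'), nat_of_ord k = nat_of_ord k' ->
         alpha k = alpha' k' /\ beta k = beta' k'),
      L = L' & R = R'].
Proof.
move=> [_ ainc bi hL hR] [_ ainc' bi' hL' hR'] E.
have irrL : forall (r0 : nat) (a : 'I_r0 -> 'I_m) i, ~~ TL a i i.
  by move=> r0 a i; apply/negP => /TL_strict; rewrite ltnn.
have irrR : forall (r0 : nat) (b : 'I_r0 -> 'I_n) i, ~~ TR b i i.
  by move=> r0 b i; apply/negP => /TR_strict; rewrite ltnn.
have gL := in_L_good (irrL _ _) hL.
have gR := in_L_good (irrR _ _) hR.
have gL' := in_L_good (irrL _ _) hL'.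
have gR' := in_L_good (irrR _ _) hR'.
have [gY' L'Y' Y'L'] := uinvP (@TL_strict _ _ alpha') (@TL_trans _ _ alpha') gL'.
have [gZ RZ ZR] := uinvP (@TR_strict _ _ beta) (fun i j k => @TR_trans _ _ beta i j k bi) gR.
set Y' := uinv L' in gY' L'Y' Y'L'.
set Z := uinv R in gZ RZ ZR.
have E2 : (Y' *m L) *m Pi alpha beta = Pi alpha' beta' *m (R' *m Z).
  have -> : Y' *m L *m Pi alpha beta = Y' *m (L *m Pi alpha beta *m R) *m Z.
    by rewrite -!mulmxA RZ mulmx1.
  by rewrite E -!mulmxA (mulmxA Y' L') Y'L' mul1mx.
have gA : good (@LT m) (Y' *m L).
  apply: good_mul; [exact: LT_strict | exact: LT_trans | |].
    exact: good_LT (@TL_strict _ _ alpha') gY'.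
  exact: good_LT (@TL_strict _ _ alpha) gL.
have gB : good (@LT n) (R' *m Z).
  apply: good_mul; [exact: LT_strict | exact: LT_trans | |].
    exact: good_LT (@TR_strict _ _ beta') gR'.
  exact: good_LT (@TR_strict _ _ beta) gZ.
have [er H] := core1 ainc ainc' bi bi' gA gB E2.
subst r'.
have ea : alpha' = alpha by apply: functional_extensionality => k; rewrite (H k).1 cast_ord_id.
have eb : beta' = beta by apply: functional_extensionality => k; rewrite (H k).2 cast_ord_id.
subst alpha' beta'.
have gA2 : good (TL alpha) (Y' *m L).
  by apply: good_mul => //; [exact: TL_strict | exact: TL_trans].
have gB2 : good (TR beta) (R' *m Z).
  apply: good_mul => //; [exact: TR_strict | move=> i j k; exact: TR_trans].
have [A1 B1] := core2 ainc bi gA2 gB2 E2.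
split => //.
  by move=> k k' e; have -> : k' = k by apply: val_inj.
  by rewrite -[L]mul1mx -L'Y' -mulmxA A1 mulmx1.
by rewrite -[R]mul1mx -B1 -mulmxA ZR mulmx1.
Qed.
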